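(* Let $\rho_{ABC}\in M_2(\mathbb{C})\otimes M_2(\mathbb{C})\otimes M_2(\mathbb{C})$ be a three-qubit state with $\mathrm{rank}(\rho_{ABC})=3$. Let $\{P_{a|0}\}_{a=0}^1,\{P_{a|1}\}_{a=0}^1$ be two nontrivial projective measurements on subsystem $A$ and $\{Q_{b|0}\}_{b=0}^1,\{Q_{b|1}\}_{b=0}^1$ two nontrivial projective measurements on subsystem $B$ that are different up to relabeling. Define $\sigma_{ab|xy}=\mathrm{Tr}_{AB}\big((P_{a|x}\otimes Q_{b|y}\otimes\mathbb{1})\rho_{ABC}\big)$ for $a,b,x,y\in\{0,1\}$. Then neither of the following two rank patterns can occur: (1) $\mathrm{rank}(\sigma_{ab|00})=1$ and $\mathrm{rank}(\sigma_{ab|11})=1$ for all $a,b$, while $\mathrm{rank}(\sigma_{ab|01})=\mathrm{rank}(\sigma_{ab|10})=2$ for all $a,b$; (2) for all $a,y\in\{0,1\}$: $\mathrm{rank}(\sigma_{a0|0y})=1$, $\mathrm{rank}(\sigma_{a1|0y})=2$, $\mathrm{rank}(\sigma_{a0|1y})=2$ and $\mathrm{rank}(\sigma_{a1|1y})=1$.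
   Context: A nontrivial projective measurement on $\mathbb{C}^2$ is a pair $\{P_0,P_1\}$ of rank-one orthogonal projections with $P_0+P_1=\mathbb{1}$. Two such measurements $\{Q_{b|0}\}_{b=0}^1,\{Q_{b|1}\}_{b=0}^1$ are ''different up to relabeling'' if $Q_{0|0}\ne Q_{0|1}$ and $Q_{0|0}\ne Q_{1|1}$. *)

(* Defs.v *)
From HB Require Import structures.
From mathcomp Require Import all_boot all_order all_algebra.
From mathcomp Require Import complex mxtens.
From mathcomp Require Import reals.
Set Implicit Arguments. Unset Strict Implicit. Unset Printing Implicit Defensive.
Import Order.TTheory GRing.Theory Num.Theory.
Local Open Scope ring_scope.

Definition adjmx {C : numClosedFieldType} {m n : nat} (A : 'M[C]_(m, n)) : 'M[C]_(n, m) :=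
  (map_mx Num.conj A)^T.

Definition psd {C : numClosedFieldType} {n : nat} (A : 'M[C]_n) : Prop :=
  adjmx A = A /\ forall v : 'cV[C]_n, 0 <= (adjmx v *m A *m v) 0 0.

(* a three-qubit state (density matrix) on C^2 (x) C^2 (x) C^2, ordered A, B, C *)
Definition density_matrix {C : numClosedFieldType} (rho : 'M[C]_(2 * 2 * 2)) : Prop :=
  psd rho /\ \tr rho = 1.

Definition rank_one_proj {C : numClosedFieldType} (P : 'M[C]_2) : Prop :=
  P *m P = P /\ adjmx P = P /\ \rank P = 1%N.

Definition nontrivial_pm {C : numClosedFieldType} (P : 'I_2 -> 'M[C]_2) : Prop :=
  rank_one_proj (P 0) /\ rank_one_proj (P 1) /\ P 0 + P 1 = 1%:M.

Definition different_up_to_relabeling {C : numClosedFieldType}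
  (Q : 'I_2 -> 'I_2 -> 'M[C]_2) : Prop :=
  Q 0 0 <> Q 0 1 /\ Q 0 0 <> Q 1 1.
(* Q b y = Q_{b|y} *)

(* partial trace over the first (4-dimensional, AB) factor of C^4 (x) C^2 *)
Definition ptraceAB {C : numClosedFieldType} (M : 'M[C]_(2 * 2 * 2)) : 'M[C]_2 :=
  \matrix_(i, j) \sum_(k < 2 * 2) M (mxtens_index (k, i)) (mxtens_index (k, j)).

Definition assemblage {C : numClosedFieldType} (rho : 'M[C]_(2 * 2 * 2))
  (P Q : 'I_2 -> 'I_2 -> 'M[C]_2) (a b x y : 'I_2) : 'M[C]_2 :=
  ptraceAB (((P a x *t Q b y) *t (1%:M : 'M[C]_2)) *m rho).

(* Main.v *)
Require Import Defs.
From HB Require Import structures.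
From mathcomp Require Import all_boot all_order all_algebra.
From mathcomp Require Import complex mxtens.
From mathcomp Require Import reals.
From mathcomp Require Import ring zify.
Set Implicit Arguments. Unset Strict Implicit. Unset Printing Implicit Defensive.
Import Order.TTheory GRing.Theory Num.Theory.
Local Open Scope ring_scope.

Section Core.
Variable F : fieldType.
Local Notation idx := (@mxtens_index _ _).
Local Notation unidx := (@mxtens_unindex _ _).

Lemma sum_tens m n (f : 'I_(m * n) -> F) :
  \sum_(l < m * n) f l = \sum_(i < m) \sum_(j < n) f (idx (i, j)).
Proof.
rewrite pair_big /=; apply: (reindex (fun p : 'I_m * 'I_n => idx (p.1, p.2))) => /=.
exists unidx => [[i j] _|l _] /=; first by rewrite mxtens_indexK.
exact: mxtens_unindexK.
Qed.

Definition indep2 (u v : 'rV[F]_2) :=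
  forall s t : F, s *: u + t *: v = 0 -> s = 0 /\ t = 0.

Definition T2 (x z : 'rV[F]_2) : 'rV[F]_(2*2) :=
  \row_(l < 2*2) (x 0 (unidx l).1 * z 0 (unidx l).2).

Definition T3 (x y z : 'rV[F]_2) : 'rV[F]_(2*2*2) :=
  \row_(l < 2*2*2) (x 0 (unidx (unidx l).1).1 * y 0 (unidx (unidx l).1).2
                    * z 0 (unidx l).2).

Definition E (b : 'rV[F]_2) : 'M[F]_(2*2, 2*2*2) :=
  \matrix_(i < 2*2, j < 2*2*2)
    (((unidx i).1 == (unidx (unidx j).1).1)%:R
     * b 0 (unidx (unidx j).1).2
     * ((unidx i).2 == (unidx j).2)%:R).

Lemma T2E x z a c : T2 x z 0 (idx (a, c)) = x 0 a * z 0 c.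
Proof. by rewrite mxE mxtens_indexK. Qed.

Lemma T3E x y z a b c : T3 x y z 0 (idx (idx (a, b), c)) = x 0 a * y 0 b * z 0 c.
Proof. by rewrite mxE !mxtens_indexK. Qed.

Lemma mulEE (u : 'rV[F]_(2*2)) b a b' c :
  (u *m E b) 0 (idx (idx (a, b'), c)) = u 0 (idx (a, c)) * b 0 b'.
Proof.
rewrite mxE sum_tens (bigD1 a) //=.
rewrite [X in _ + X]big1 ?addr0; last first.
  move=> i /negPf hi; rewrite big1 // => j _.
  by rewrite mxE !mxtens_indexK /= hi mulr0n !mul0r mulr0.
rewrite (bigD1 c) //= big1 ?addr0; last first.
  by move=> j /negPf hj; rewrite mxE !mxtens_indexK /= eqxx hj mulr0n !mulr0.
by rewrite mxE !mxtens_indexK /= !eqxx mulr1 mul1r.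
Qed.

Lemma T2_E x z b : T2 x z *m E b = T3 x b z.
Proof.
apply/rowP => l; case: (mxtens_indexP l) => ab c; case: (mxtens_indexP ab) => a b'.
by rewrite mulEE T2E T3E mulrAC.
Qed.

Lemma E_lin s t b b' : E (s *: b + t *: b') = s *: E b + t *: E b'.
Proof.
apply/matrixP => i j; rewrite !mxE.
rewrite mulrDr mulrDl !mulrA.
rewrite -!mulrA; congr (_ + _); rewrite !mulrA; ring.
Qed.


Lemma addE m n (A B : 'M[F]_(m, n)) i j : (A + B) i j = A i j + B i j.
Proof. by rewrite mxE. Qed.

Lemma rowP2 (u v : 'rV[F]_2) : u 0 0 = v 0 0 -> u 0 1 = v 0 1 -> u = v.
Proof.
move=> h0 h1; apply/rowP => j.
have [->|->] : j = 0 \/ j = 1.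
  by case: j => [[|[|//]]] ? ; [left|right]; apply: val_inj.
  by [].
by [].
Qed.

Lemma T2_lin x s t g h : T2 x (s *: g + t *: h) = s *: T2 x g + t *: T2 x h.
Proof. by apply/rowP => l; rewrite !mxE; ring. Qed.

Lemma T2Z x s g : T2 x (s *: g) = s *: T2 x g.
Proof. by apply/rowP => l; rewrite !mxE; ring. Qed.

Lemma T20 x : T2 x 0 = 0.
Proof. by apply/rowP => l; rewrite !mxE mulr0. Qed.

Lemma T3_E x b z : T3 x b z = T2 x z *m E b.
Proof. by rewrite T2_E. Qed.

Lemma T3_lin x s t b b' z : T3 x (s *: b + t *: b') z = s *: T3 x b z + t *: T3 x b' z.
Proof. by rewrite !T3_E E_lin mulmxDr !scalemxAr. Qed.

Lemma T3Z x s b z : T3 x (s *: b) z = s *: T3 x b z.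
Proof. by rewrite !T3_E scalemxAr; congr (_ *m _); apply/matrixP => i j; rewrite !mxE; ring. Qed.

Lemma T30 x z : T3 x 0 z = 0.
Proof. by apply/rowP => l; rewrite !mxE mulr0 mul0r. Qed.

Lemma indep2_span u v : indep2 u v -> forall w, exists s t, w = s *: u + t *: v.
Proof.
move=> hi w.
have hd : u 0 0 * v 0 1 - u 0 1 * v 0 0 != 0.
  apply/negP => /eqP hd.
  case: (eqVneq (u 0 1) 0) => hu1.
    case: (eqVneq (v 0 1) 0) => hv1.
      case: (eqVneq (u 0 0) 0) => hu0.
        have := hi 1 0; case.
          by apply: rowP2; rewrite !mxE ?hu0 ?hu1; ring.
        by move=> /eqP; rewrite oner_eq0.
      have := hi (v 0 0) (- u 0 0); case.
        by apply: rowP2; rewrite !mxE ?hu1 ?hv1; ring.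
      by move=> _ /eqP; rewrite oppr_eq0 (negPf hu0).
    have := hi (v 0 1) (- u 0 1); case.
      by apply: rowP2; rewrite !mxE; [rewrite -hd|]; ring.
    by move=> /eqP; rewrite (negPf hv1).
  have := hi (v 0 1) (- u 0 1); case.
    by apply: rowP2; rewrite !mxE; [rewrite -hd|]; ring.
  by move=> _ /eqP; rewrite oppr_eq0 (negPf hu1).
exists ((w 0 0 * v 0 1 - w 0 1 * v 0 0) / (u 0 0 * v 0 1 - u 0 1 * v 0 0)).
exists ((u 0 0 * w 0 1 - u 0 1 * w 0 0) / (u 0 0 * v 0 1 - u 0 1 * v 0 0)).
by apply: rowP2; rewrite !mxE; field.
Qed.

Lemma mulrowcol (D : 'M[F]_(1, 1 + 1)) n (u v : 'rV[F]_n) :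
  D *m col_mx u v = (lsubmx D 0 0) *: u + (rsubmx D 0 0) *: v.
Proof.
by rewrite -{1}[D]hsubmxK mul_row_col {1}[lsubmx D]mx11_scalar
  {1}[rsubmx D]mx11_scalar !mul_scalar_mx.
Qed.

Lemma rank_colmx n (u v : 'rV[F]_n) :
  (forall s t, s *: u + t *: v = 0 -> s = 0 /\ t = 0) -> \rank (col_mx u v) = 2%N.
Proof.
move=> hi; apply/eqP; rewrite -[2%N]/(1 + 1)%N -/(row_free _) -kermx_eq0.
apply/eqP/row_matrixP => i; rewrite row0.
set w := row i _.
have hw : w *m col_mx u v = 0 by rewrite /w -row_mul mulmx_ker row0.
move: hw; rewrite mulrowcol => /hi [h1 h2].
rewrite -[w]hsubmxK [lsubmx w]mx11_scalar [rsubmx w]mx11_scalar h1 h2.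
by apply/matrixP => a b; rewrite !mxE; case: split => ?; rewrite !mxE mul0rn.
Qed.

Lemma sub_colmx n (x u v : 'rV[F]_n) :
  (x <= col_mx u v)%MS -> exists s t, x = s *: u + t *: v.
Proof.
by case/submxP => D ->; rewrite mulrowcol; eexists; eexists.
Qed.

Lemma rowfree_inj m n (A : 'M[F]_(m, n)) :
  (forall u : 'rV_m, u *m A = 0 -> u = 0) -> row_free A.
Proof.
move=> h; rewrite -kermx_eq0; apply/eqP/row_matrixP => i; rewrite row0.
by apply: h; rewrite -row_mul mulmx_ker row0.
Qed.

Lemma E_inj b b' (u u' : 'rV[F]_(2*2)) : indep2 b b' ->
  u *m E b + u' *m E b' = 0 -> u = 0 /\ u' = 0.
Proof.
move=> hi h.
have hk : forall k, u 0 k = 0 /\ u' 0 k = 0.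
  move=> k; case: (mxtens_indexP k) => a c; apply: hi.
  apply/rowP => j; rewrite !mxE.
  have := congr1 (fun M : 'rV[F]_(2*2*2) => M 0 (idx (idx (a, j), c))) h.
  by rewrite addE !mulEE [RHS]mxE => ->.
by split; apply/rowP => k; rewrite mxE; case: (hk k).
Qed.

Lemma indep2_nz u v : indep2 u v -> u != 0.
Proof.
move=> hi; apply/eqP => hu; have := hi 1 0; rewrite hu scaler0 scale0r addr0.
by case => // /eqP; rewrite oner_eq0.
Qed.

Lemma indep2_sym u v : indep2 u v -> indep2 v u.
Proof. by move=> hi s t; rewrite addrC => /hi []. Qed.

Lemma E_rowfree b : b != 0 -> row_free (E b).
Proof.
move=> hb; apply: rowfree_inj => u hu.
apply/rowP => k; rewrite mxE; case: (mxtens_indexP k) => a c.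
suff: u 0 (idx (a, c)) *: b = 0.
  by move/eqP; rewrite scaler_eq0 (negPf hb) orbF => /eqP.
apply/rowP => j; rewrite [RHS]mxE mxE.
have := congr1 (fun M : 'rV[F]_(2*2*2) => M 0 (idx (idx (a, j), c))) hu.
by rewrite mulEE [RHS]mxE.
Qed.

Lemma T2_indep p0 p1 g h : indep2 p0 p1 -> T2 p0 g + T2 p1 h = 0 -> g = 0 /\ h = 0.
Proof.
move=> hi e.
have hc : forall c, g 0 c = 0 /\ h 0 c = 0.
  move=> c; apply: hi; apply/rowP => a; rewrite !mxE.
  have := congr1 (fun M : 'rV[F]_(2*2) => M 0 (idx (a, c))) e.
  by rewrite !mxE !mxtens_indexK /= => <-; ring.
by split; apply/rowP => c; rewrite mxE; case: (hc c).
Qed.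

Lemma T2_eq0 x g : x != 0 -> T2 x g = 0 -> g = 0.
Proof.
move=> hx e; apply/rowP => c; rewrite mxE.
apply/eqP/negPn/negP => hg; move/negP: hx; apply; apply/eqP/rowP => a.
have := congr1 (fun M : 'rV[F]_(2*2) => M 0 (idx (a, c))) e.
rewrite !mxE !mxtens_indexK /= => /eqP; rewrite mulf_eq0 (negPf hg) orbF.
by move/eqP.
Qed.

End Core.

Section CoreRho.
Variable F : fieldType.
Variable rho : 'M[F]_(2*2*2).
Hypothesis rank3 : \rank rho = 3%N.
Implicit Types (p g h u v b d a : 'rV[F]_2).

Definition X_def (b : 'rV[F]_2) : 'M[F]_(2*2) := kermx (E b *m rho).
Fact X_key : unit. Proof. by []. Qed.
Definition X := locked_with X_key X_def.
Lemma XE : X = X_def. Proof. exact: unlock. Qed.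

Lemma memX m (x : 'M[F]_(m, 2*2)) b : (x <= X b)%MS = (x *m E b *m rho == 0).
Proof. by rewrite XE sub_kermx mulmxA. Qed.

Lemma memX_T2 a g b : (T2 a g <= X b)%MS = (T3 a b g *m rho == 0).
Proof. by rewrite memX T2_E. Qed.

Lemma XE_sub b : (X b *m E b <= kermx rho)%MS.
Proof. by rewrite sub_kermx -mulmxA XE mulmx_ker. Qed.

Lemma rank_kerrho : \rank (kermx rho) = 5%N.
Proof. by rewrite mxrank_ker rank3. Qed.

Lemma rank_XE b : b != 0 -> \rank (X b *m E b) = \rank (X b).
Proof. by move=> hb; rewrite mxrankMfree // E_rowfree. Qed.

Lemma rank_sumXE b b' : indep2 b b' ->
  \rank (X b *m E b + X b' *m E b')%MS = (\rank (X b) + \rank (X b'))%N.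
Proof.
move=> hi.
have hb := indep2_nz hi; have hb' := indep2_nz (indep2_sym hi).
have hcap : (X b *m E b :&: X b' *m E b')%MS = 0.
  apply/eqP; rewrite -nz_row_eq0.
  set w := nz_row _.
  have h1 : (w <= X b *m E b)%MS := submx_trans (nz_row_sub _) (capmxSl _ _).
  have h2 : (w <= X b' *m E b')%MS := submx_trans (nz_row_sub _) (capmxSr _ _).
  case/submxP: h1 => D hD; case/submxP: h2 => D' hD'.
  have : (D *m X b) *m E b + (- (D' *m X b')) *m E b' = 0.
    by rewrite mulNmx; rewrite mulmxA in hD; rewrite mulmxA in hD'; rewrite -hD -hD' subrr.
  by case/(E_inj hi) => h0 _; rewrite hD mulmxA h0 mul0mx.
by have := mxrank_sum_cap (X b *m E b) (X b' *m E b'); rewrite hcap mxrank0 addn0 !rank_XE.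
Qed.

Lemma rank_sum_le b b' : indep2 b b' -> (\rank (X b) + \rank (X b') <= 5)%N.
Proof.
move=> hi; rewrite -rank_sumXE // -rank_kerrho; apply: mxrankS.
by rewrite addsmx_sub !XE_sub.
Qed.

Lemma triple bi bj bk l m : indep2 bi bj -> bk = l *: bi + m *: bj -> bk != 0 ->
  (2 <= \rank (X bi))%N -> (2 <= \rank (X bj))%N -> (2 <= \rank (X bk))%N ->
  exists x : 'rV[F]_(2*2), [/\ x != 0, (x <= X bk)%MS, (l *: x <= X bi)%MS &
     (m *: x <= X bj)%MS].
Proof.
move=> hi ek hk ri rj rk.
set A := (X bi *m E bi + X bj *m E bj)%MS.
set B := X bk *m E bk.
have rA : (4 <= \rank A)%N by rewrite /A rank_sumXE // (leq_add ri rj).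
have rB : (2 <= \rank B)%N by rewrite /B rank_XE.
have rAB : (\rank (A + B)%MS <= 5)%N.
  by rewrite -rank_kerrho; apply: mxrankS; rewrite !addsmx_sub !XE_sub.
have rcap : (0 < \rank (A :&: B)%MS)%N.
  have := mxrank_sum_cap A B.
  move: rA rB rAB; set a := \rank A; set bb := \rank B; set c := \rank (A + B)%MS.
  set d := \rank (A :&: B)%MS => rA rB rAB hs.
  rewrite lt0n; apply/eqP => hd; move: hs; rewrite hd addn0 => hs.
  by move: rAB; rewrite hs => /(leq_trans (leq_add rA rB)).
set w := nz_row (A :&: B)%MS.
have wnz : w != 0 by rewrite nz_row_eq0 -mxrank_eq0 -lt0n.
have hA : (w <= A)%MS := submx_trans (nz_row_sub _) (capmxSl _ _).
have hB : (w <= B)%MS := submx_trans (nz_row_sub _) (capmxSr _ _).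
case/submxP: hB => D hD.
case/sub_addsmxP: hA => [[u1 u2]] /= hw.
exists (D *m X bk).
have eq1 : (l *: (D *m X bk) - u1 *m X bi) *m E bi +
           (m *: (D *m X bk) - u2 *m X bj) *m E bj = 0.
  have e3 : (D *m X bk) *m E bk = w by rewrite hD; apply: esym; apply: mulmxA.
  have e4 : u1 *m X bi *m E bi + u2 *m X bj *m E bj = w.
    by rewrite hw; congr (_ + _); apply: esym; apply: mulmxA.
  rewrite !mulmxBl -!scalemxAl addrACA -opprD e4.
  by rewrite !scalemxAr -mulmxDr -E_lin -ek e3 subrr.
have [e1 e2] := E_inj hi eq1.
split.
- by apply: contraNneq wnz => h0; rewrite hD mulmxA h0 mul0mx.
- exact: submxMl.
- by move/eqP: e1; rewrite subr_eq0 => /eqP ->; apply: submxMl.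
- by move/eqP: e2; rewrite subr_eq0 => /eqP ->; apply: submxMl.
Qed.


Lemma sub_rank_eq m1 m2 n (A : 'M[F]_(m1, n)) (B : 'M[F]_(m2, n)) :
  (A <= B)%MS -> (\rank B <= \rank A)%N -> (B <= A)%MS.
Proof.
move=> hAB hr; rewrite -(mxrank_leqif_sup hAB).2 eqn_leq hr andbT.
exact: mxrankS.
Qed.

Lemma G_rank (p0 p1 : 'rV[F]_2) g h : indep2 p0 p1 -> g != 0 -> h != 0 ->
  \rank (col_mx (T2 p0 g) (T2 p1 h)) = 2%N.
Proof.
move=> hp hg hh; apply: rank_colmx => s t e.
have [e1 e2] : s *: g = 0 /\ t *: h = 0 by apply: (T2_indep hp); rewrite !T2Z.
move/eqP: e1; rewrite scaler_eq0 (negPf hg) orbF => /eqP ->.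
by move/eqP: e2; rewrite scaler_eq0 (negPf hh) orbF => /eqP ->.
Qed.

Lemma lowerX (p0 p1 : 'rV[F]_2) b g h : indep2 p0 p1 -> g != 0 -> h != 0 ->
  T3 p0 b g *m rho = 0 -> T3 p1 b h *m rho = 0 -> (2 <= \rank (X b))%N.
Proof.
move=> hp hg hh e1 e2.
have hs : (col_mx (T2 p0 g) (T2 p1 h) <= X b)%MS.
  by rewrite col_mx_sub !memX_T2 e1 e2 eqxx.
by have := mxrankS hs; rewrite G_rank.
Qed.

Lemma upperX (r0 : 'rV[F]_2) u v b : r0 != 0 -> indep2 u v ->
  (forall g, g != 0 -> T3 r0 b g *m rho != 0) -> (\rank (X b) <= 2)%N.
Proof.
move=> hr hi hN.
set R := col_mx (T2 r0 u) (T2 r0 v).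
have rR : \rank R = 2%N.
  apply: rank_colmx => s t; rewrite -T2_lin => /(T2_eq0 hr); exact: hi.
rewrite leqNgt; apply/negP => h3.
have hs := mxrank_sum_cap (X b) R.
have hle : (\rank (X b + R)%MS <= 4)%N by apply: rank_leq_col.
have hcap : (0 < \rank (X b :&: R)%MS)%N.
  rewrite lt0n; apply/eqP => hd; move: hs; rewrite hd addn0 rR => hs.
  by move: hle h3; rewrite hs; lia.
set w := nz_row (X b :&: R)%MS.
have wnz : w != 0 by rewrite nz_row_eq0 -mxrank_eq0 -lt0n.
have h1 : (w <= X b)%MS := submx_trans (nz_row_sub _) (capmxSl _ _).
have h2 : (w <= R)%MS := submx_trans (nz_row_sub _) (capmxSr _ _).
case: (sub_colmx h2) => s [t ew].
move: ew; rewrite -T2_lin => ew.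
have gnz : s *: u + t *: v != 0.
  by apply: contraNneq wnz => e0; rewrite ew e0 T20.
by move: h1; rewrite ew memX_T2 (negPf (hN _ gnz)).
Qed.

Lemma T2B x g h : T2 x (g - h) = T2 x g - T2 x h.
Proof. by apply/rowP => l; rewrite !mxE; ring. Qed.

Lemma half (p0 p1 c0 c0' : 'rV[F]_2) d : indep2 p0 p1 -> indep2 c0 c0' ->
  (forall be a, (be = c0 \/ be = c0') -> (a = p0 \/ a = p1) ->
     exists2 g, g != 0 & T3 a be g *m rho = 0) ->
  (forall be, (be = c0 \/ be = c0') -> (\rank (X be) <= 2)%N) ->
  (forall a g, (a = p0 \/ a = p1) -> g != 0 -> T3 a d g *m rho != 0) ->
  (2 <= \rank (X d))%N ->
  (X c0 == X c0')%MS.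
Proof.
move=> hp hc hE hle hN hd.
have [g1 g1n e1] := hE c0 p0 (or_introl erefl) (or_introl erefl).
have [g2 g2n e2] := hE c0 p1 (or_introl erefl) (or_intror erefl).
have [g3 g3n e3] := hE c0' p0 (or_intror erefl) (or_introl erefl).
have [g4 g4n e4] := hE c0' p1 (or_intror erefl) (or_intror erefl).
have hle0 := hle c0 (or_introl erefl); have hle1 := hle c0' (or_intror erefl).
set G := col_mx (T2 p0 g1) (T2 p1 g2).
set G' := col_mx (T2 p0 g3) (T2 p1 g4).
have GX : (G <= X c0)%MS by rewrite col_mx_sub !memX_T2 e1 e2 eqxx.
have GX' : (G' <= X c0')%MS by rewrite col_mx_sub !memX_T2 e3 e4 eqxx.
have rG : \rank G = 2%N by apply: G_rank.
have rG' : \rank G' = 2%N by apply: G_rank.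
have XG : (X c0 <= G)%MS by apply: sub_rank_eq; rewrite // rG.
have XG' : (X c0' <= G')%MS by apply: sub_rank_eq; rewrite // rG'.
have r0' : (2 <= \rank (X c0))%N by have := mxrankS GX; rewrite rG.
have r1' : (2 <= \rank (X c0'))%N by have := mxrankS GX'; rewrite rG'.
apply/negPn/negP => hne.
have [l [m ed]] := indep2_span hc d.
have dnz : d != 0.
  by apply: contraTneq (hN p0 g1 (or_introl erefl) g1n) => ->; rewrite T30 mul0mx eqxx.
have lnz : l != 0.
  apply: contraTneq (hN p0 g3 (or_introl erefl) g3n) => l0.
  by rewrite ed l0 scale0r add0r T3Z -scalemxAl e3 scaler0 eqxx.
have mnz : m != 0.
  apply: contraTneq (hN p0 g1 (or_introl erefl) g1n) => m0.
  by rewrite ed m0 scale0r addr0 T3Z -scalemxAl e1 scaler0 eqxx.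
have [x [xnz xd xl xm]] := triple hc ed dnz r0' r1' hd.
have x0 : (x <= X c0)%MS.
  by rewrite -[x](scalerK lnz); apply: scalemx_sub.
have x1 : (x <= X c0')%MS.
  by rewrite -[x](scalerK mnz); apply: scalemx_sub.
have [s [t ex]] := sub_colmx (submx_trans x0 XG).
have [s' [t' ex']] := sub_colmx (submx_trans x1 XG').
have [f1 f2] : s *: g1 - s' *: g3 = 0 /\ t *: g2 - t' *: g4 = 0.
  apply: (T2_indep hp); rewrite !T2B !T2Z addrACA -opprD -ex -ex' subrr //.
have gx : forall a h, (a = p0 \/ a = p1) -> x = T2 a h -> False.
  move=> a h ha exh.
  have hnz : h != 0 by apply: contraNneq xnz => h0; rewrite exh h0 T20.
  by move: xd; rewrite exh memX_T2 (negPf (hN a h ha hnz)).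
case: (eqVneq s 0) => s0.
  by apply: (gx p1 (t *: g2) (or_intror erefl)); rewrite ex s0 scale0r add0r T2Z.
case: (eqVneq t 0) => t0.
  by apply: (gx p0 (s *: g1) (or_introl erefl)); rewrite ex t0 scale0r addr0 T2Z.
have GX'2 : (G <= X c0')%MS.
  rewrite col_mx_sub; apply/andP; split.
    have -> : g1 = (s^-1 * s') *: g3.
      move/eqP: f1; rewrite subr_eq0 => /eqP f1'.
      by rewrite -scalerA -f1' scalerA mulVf // scale1r.
    by rewrite T2Z; apply: scalemx_sub; rewrite memX_T2 e3.
  have -> : g2 = (t^-1 * t') *: g4.
    move/eqP: f2; rewrite subr_eq0 => /eqP f2'.
    by rewrite -scalerA -f2' scalerA mulVf // scale1r.
  by rewrite T2Z; apply: scalemx_sub; rewrite memX_T2 e4.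
have X01 : (X c0 <= X c0')%MS := submx_trans XG GX'2.
have X10 : (X c0' <= X c0)%MS by apply: sub_rank_eq => //; apply: leq_trans hle1 r0'.
by move: hne; rewrite X01 X10.
Qed.


Lemma core (p0 p1 r0 r1 b0 b0' b1 b1' : 'rV[F]_2) :
  indep2 p0 p1 -> indep2 r0 r1 -> indep2 b0 b0' -> indep2 b1 b1' ->
  (forall be a, (be = b0 \/ be = b0') -> (a = p0 \/ a = p1) ->
     exists2 g, g != 0 & T3 a be g *m rho = 0) ->
  (forall be a g, (be = b0 \/ be = b0') -> (a = r0 \/ a = r1) -> g != 0 ->
     T3 a be g *m rho != 0) ->
  (forall be a, (be = b1 \/ be = b1') -> (a = r0 \/ a = r1) ->
     exists2 g, g != 0 & T3 a be g *m rho = 0) ->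
  (forall be a g, (be = b1 \/ be = b1') -> (a = p0 \/ a = p1) -> g != 0 ->
     T3 a be g *m rho != 0) ->
  False.
Proof.
move=> hp hr hb0 hb1 H1 H2 H3 H4.
have [g1 g1n e1] := H1 b0 p0 (or_introl erefl) (or_introl erefl).
have [g2 g2n e2] := H1 b0 p1 (or_introl erefl) (or_intror erefl).
have hd : (2 <= \rank (X b0))%N by apply: (lowerX hp g1n g2n e1 e2).
have hle : forall be, (be = b1 \/ be = b1') -> (\rank (X be) <= 2)%N.
  move=> be hbe; apply: (upperX (indep2_nz hp) hb0) => g gn.
  exact: H4 _ _ _ hbe (or_introl erefl) gn.
have heq := half hr hb1 H3 hle (fun a g ha gn => H2 b0 a g (or_introl erefl) ha gn) hd.
have [h hn eh] := H3 b1 r0 (or_introl erefl) (or_introl erefl).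
have [l [m eb]] := indep2_span hb1 b0.
have m1 : (T2 r0 h <= X b1')%MS.
  by apply: submx_trans (proj1 (andP heq)); rewrite memX_T2 eh.
move: m1; rewrite memX_T2 => /eqP m1.
have := H2 b0 r0 h (or_introl erefl) (or_introl erefl) hn.
by rewrite eb T3_lin mulmxDl -!scalemxAl eh m1 !scaler0 addr0 eqxx.
Qed.

End CoreRho.

Section Part1.
Variable C : numClosedFieldType.

Lemma adjmxE m n (A : 'M[C]_(m, n)) i j : adjmx A i j = (A j i)^*.
Proof. by rewrite !mxE. Qed.

Lemma adjmxK m n (A : 'M[C]_(m, n)) : adjmx (adjmx A) = A.
Proof. by apply/matrixP => i j; rewrite !adjmxE conjCK. Qed.

Lemma adjmxM m n p (A : 'M[C]_(m, n)) (B : 'M[C]_(n, p)) :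
  adjmx (A *m B) = adjmx B *m adjmx A.
Proof. by rewrite /adjmx map_mxM trmx_mul. Qed.

Lemma adjmxB m n (A B : 'M[C]_(m, n)) : adjmx (A - B) = adjmx A - adjmx B.
Proof. by apply/matrixP => i j; rewrite !mxE rmorphB. Qed.

Lemma adjmxZ m n a (A : 'M[C]_(m, n)) : adjmx (a *: A) = a^* *: adjmx A.
Proof. by apply/matrixP => i j; rewrite !mxE rmorphM. Qed.

Lemma addE' m n (A B : 'M[C]_(m, n)) i j : (A + B) i j = A i j + B i j.
Proof. by rewrite mxE. Qed.
Lemma subE' m n (A B : 'M[C]_(m, n)) i j : (A - B) i j = A i j - B i j.
Proof. by rewrite !mxE. Qed.
Lemma scaleE' m n a (A : 'M[C]_(m, n)) i j : (a *: A) i j = a * A i j.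
Proof. by rewrite mxE. Qed.

Lemma form_self_ge0 n (z : 'rV[C]_n) : 0 <= (z *m adjmx z) 0 0.
Proof.
rewrite mxE; apply: sumr_ge0 => i _; rewrite adjmxE; exact: mul_conjC_ge0.
Qed.

Lemma form_self_eq0 n (z : 'rV[C]_n) : (z *m adjmx z) 0 0 = 0 -> z = 0.
Proof.
rewrite mxE => h; apply/rowP => i; rewrite mxE.
have hz : forall j : 'I_n, true -> 0 <= z 0 j * adjmx z j 0.
  by move=> j _; rewrite adjmxE mul_conjC_ge0.
have := psumr_eq0P hz h (i:=i) isT; rewrite adjmxE => /eqP.
by rewrite mul_conjC_eq0 => /eqP.
Qed.

Lemma psd_ker n (rho : 'M[C]_n) (v : 'rV[C]_n) : psd rho ->
  (v *m rho *m adjmx v) 0 0 = 0 -> v *m rho = 0.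
Proof.
case=> hh hpos hv.
have fge0 : forall x : 'rV[C]_n, 0 <= (x *m rho *m adjmx x) 0 0.
  by move=> x; have := hpos (adjmx x); rewrite adjmxK.
set z := v *m rho.
set al := (z *m adjmx z) 0 0.
set be := (z *m rho *m adjmx z) 0 0.
have al0 : 0 <= al by apply: form_self_ge0.
have be0 : 0 <= be by apply: fge0.
have e1 : (z *m rho *m adjmx v) 0 0 = al.
  by rewrite /al /z adjmxM hh -!mulmxA.
have sesq : forall s, ((v - s *: z) *m rho *m adjmx (v - s *: z)) 0 0
    = - s^* * al - s * al + s * s^* * be.
  move=> s; rewrite adjmxB adjmxZ !mulmxBl !mulmxBr -!scalemxAl -!scalemxAr.
  rewrite !subE' !scaleE' hv -/z e1 -/al -/be; ring.
set s := al / (be + 1).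
have be1 : be + 1 != 0 by rewrite lt0r_neq0 // ltr_wpDl.
have sreal : s^* = s.
  apply: conj_Creal; rewrite /s rpredM ?rpredV ?rpredD ?ger0_real //.
have := fge0 (v - s *: z); rewrite sesq sreal.
have -> : - s * al - s * al + s * s * be = - (al ^+ 2 * (be + 2) / (be + 1) ^+ 2).
  by rewrite /s; field.
rewrite oppr_ge0 => hle.
have hge : 0 <= al ^+ 2 * (be + 2) / (be + 1) ^+ 2.
  by rewrite !mulr_ge0 ?invr_ge0 ?exprn_ge0 ?addr_ge0 ?ler01 ?ler0n.
have := le_anti (introT andP (conj hle hge)) => /eqP.
rewrite !mulf_eq0 invr_eq0 !expf_eq0 /= (negPf be1) orbF.
have be2 : be + 2 != 0 by rewrite lt0r_neq0 // ltr_wpDl.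
rewrite (negPf be2) orbF orbb => /eqP; exact: form_self_eq0.
Qed.


Lemma rank1_fact n (P : 'M[C]_n) : adjmx P = P -> \rank P = 1%N ->
  exists u : 'rV[C]_n, exists s : C, [/\ u != 0, s != 0 & P = s *: (adjmx u *m u)].
Proof.
move=> hP rP.
have Pnz : P != 0 by rewrite -mxrank_eq0 rP.
have unz : nz_row P != 0 by rewrite nz_row_eq0.
have hPu : (P <= nz_row P)%MS.
  by rewrite -(mxrank_leqif_sup (nz_row_sub P)).2 rank_rV unz rP.
move: unz hPu; set u := nz_row P => unz hPu.
case/submxP: hPu => D hD.
set al := (u *m adjmx u) 0 0.
have alnz : al != 0 by apply: contraNneq unz => /form_self_eq0 ->.
set be := (adjmx D *m adjmx u) 0 0.
have key : D *m (u *m adjmx u) = adjmx u *m (adjmx D *m adjmx u).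
  by rewrite [LHS]mulmxA -hD -{1}hP hD adjmxM -mulmxA.
rewrite [u *m adjmx u]mx11_scalar [adjmx D *m adjmx u]mx11_scalar in key.
rewrite mul_mx_scalar mul_mx_scalar -/al -/be in key.
have eD : D = (be / al) *: adjmx u.
  by rewrite mulrC -scalerA -key scalerA mulVf // scale1r.
exists u; exists (be / al); split => //.
  by apply: contraNneq Pnz => s0; rewrite hD eD s0 scale0r mul0mx.
by rewrite hD eD scalemxAl.
Qed.

End Part1.

Section Part2.
Variable C : numClosedFieldType.
Local Notation idx := (@mxtens_index _ _).
Local Notation unidx := (@mxtens_unindex _ _).

Lemma ptrace_entry (P Q : 'M[C]_2) (rho : 'M[C]_(2*2*2)) i j :
  ptraceAB (((P *t Q) *t 1%:M) *m rho) i j =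
  \sum_(a < 2) \sum_(b < 2) \sum_(a' < 2) \sum_(b' < 2)
     P a a' * Q b b' * rho (idx (idx (a', b'), i)) (idx (idx (a, b), j)).
Proof.
rewrite mxE sum_tens; apply: eq_bigr => a _; apply: eq_bigr => b _.
rewrite mxE sum_tens sum_tens; apply: eq_bigr => a' _; apply: eq_bigr => b' _.
rewrite (bigD1 i) //= big1 ?addr0.
  by rewrite !tensmxE mxE eqxx mulr1.
by move=> i' /negPf hi; rewrite !tensmxE mxE eq_sym hi mulr0n mulr0 mul0r.
Qed.

Lemma projE (p : 'rV[C]_2) s a a' :
  (s *: (adjmx p *m p)) a a' = s * ((p 0 a)^* * p 0 a').
Proof. by rewrite mxE mxE big_ord1 adjmxE. Qed.

Lemma T3rhoE (x y z : 'rV[C]_2) (rho : 'M[C]_(2*2*2)) l :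
  (T3 x y z *m rho) 0 l = \sum_(a < 2) \sum_(b < 2) \sum_(c < 2)
     x 0 a * y 0 b * z 0 c * rho (idx (idx (a, b), c)) l.
Proof.
rewrite mxE sum_tens sum_tens; do 3 (apply: eq_bigr => ? _); by rewrite T3E.
Qed.


Lemma sigma_row (p q g : 'rV[C]_2) (s t : C) (rho : 'M[C]_(2*2*2)) j :
  (g *m ptraceAB ((((s *: (adjmx p *m p)) *t (t *: (adjmx q *m q))) *t 1%:M) *m rho)) 0 j =
  s * t * \sum_(a < 2) \sum_(b < 2)
    ((p 0 a)^* * (q 0 b)^* * (T3 p q g *m rho) 0 (idx (idx (a, b), j))).
Proof.
rewrite mxE !big_ord_recr !big_ord0 /= !ptrace_entry !T3rhoE.
rewrite !big_ord_recr !big_ord0 /= !projE.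
ring.
Qed.


Definition sigPQ (p q : 'rV[C]_2) (s t : C) (rho : 'M[C]_(2*2*2)) :=
  ptraceAB ((((s *: (adjmx p *m p)) *t (t *: (adjmx q *m q))) *t 1%:M) *m rho).

Lemma sigma_ker2 (p q g : 'rV[C]_2) s t rho :
  T3 p q g *m rho = 0 -> g *m sigPQ p q s t rho = 0.
Proof.
move=> hT; apply/rowP => j; rewrite sigma_row hT [RHS]mxE.
rewrite big1 ?mulr0 // => a _; rewrite big1 // => b _; by rewrite mxE mulr0.
Qed.

Lemma sigma_ker1 (p q g : 'rV[C]_2) s t rho : psd rho -> s != 0 -> t != 0 ->
  g *m sigPQ p q s t rho = 0 -> T3 p q g *m rho = 0.
Proof.
move=> hpsd hs ht hg; apply: (psd_ker hpsd).
have h0 : ((g *m sigPQ p q s t rho) *m adjmx g) 0 0 = 0 by rewrite hg mul0mx mxE.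
move: h0; rewrite mxE !big_ord_recr big_ord0 /= !sigma_row !adjmxE.
set Y := T3 p q g *m rho => h0.
rewrite mxE sum_tens sum_tens.
rewrite !big_ord_recr !big_ord0 /= !adjmxE !T3E !rmorphM.
rewrite !big_ord_recr !big_ord0 /= in h0.
apply: (mulfI (mulf_neq0 hs ht)); rewrite mulr0 -[RHS]h0; ring.
Qed.

Lemma rank1_ker (S : 'M[C]_2) : \rank S = 1%N -> exists2 g : 'rV[C]_2, g != 0 & g *m S = 0.
Proof.
move=> hS; exists (nz_row (kermx S)).
  by rewrite nz_row_eq0 -mxrank_eq0 mxrank_ker hS.
by apply/sub_kermxP; apply: nz_row_sub.
Qed.

Lemma rank2_inj (S : 'M[C]_2) (g : 'rV[C]_2) : \rank S = 2%N -> g *m S = 0 -> g = 0.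
Proof.
move=> hS hg; have hu : S \in unitmx by rewrite -row_free_unit /row_free hS.
by rewrite -(mulmxK hu g) hg mul0mx.
Qed.

End Part2.

Section Part3.
Variable C : numClosedFieldType.

Lemma proj_scale (A B : 'M[C]_2) (a b : 'rV[C]_2) sa sb k :
  A = sa *: (adjmx a *m a) -> B = sb *: (adjmx b *m b) -> sb != 0 ->
  a = k *: b -> A = (sa * (k^* * k) / sb) *: B.
Proof.
move=> -> -> hsb ->; rewrite adjmxZ -scalemxAl -scalemxAr !scalerA.
by congr (_ *: _); field.
Qed.

Lemma indep_gen (A B : 'M[C]_2) (a b : 'rV[C]_2) sa sb :
  A = sa *: (adjmx a *m a) -> B = sb *: (adjmx b *m b) ->
  b != 0 -> sb != 0 -> (forall k, A != k *: B) -> indep2 a b.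
Proof.
move=> hA hB hb hsb hk s t e.
case: (eqVneq s 0) => s0.
  move: e; rewrite s0 scale0r add0r => /eqP; rewrite scaler_eq0 (negPf hb) orbF.
  by move/eqP.
have ea : a = (- t / s) *: b.
  have e' : s *: a = (- t) *: b by rewrite scaleNr; apply/eqP; rewrite -addr_eq0 e.
  by rewrite -[a](scalerK s0) e' scalerA mulrC.
by move: (hk (sa * ((- t / s)^* * (- t / s)) / sb)); rewrite (proj_scale hA hB hsb ea) eqxx.
Qed.

Lemma noscale_sum (A B : 'M[C]_2) : rank_one_proj B -> A + B = 1%:M ->
  forall k, A != k *: B.
Proof.
move=> [_ [_ rB]] hs k; apply/eqP => hA.
have : (\rank (1%:M : 'M[C]_2) <= \rank B)%N.
  by rewrite -hs hA -{2}[B]scale1r -scalerDl; apply: mxrankS; apply: scalemx_sub.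
by rewrite mxrank1 rB.
Qed.

Lemma noscale_neq (A B : 'M[C]_2) : rank_one_proj A -> rank_one_proj B -> A != B ->
  forall k, A != k *: B.
Proof.
move=> [hAA [_ rA]] [hBB [_ rB]] hne k; apply/eqP => hA.
have Bnz : B != 0 by rewrite -mxrank_eq0 rB.
have e : (k * k - k) *: B = 0.
  by rewrite scalerBl -scalerA -{1}hBB scalemxAl scalemxAr -hA hAA hA subrr.
move/eqP: e; rewrite scaler_eq0 (negPf Bnz) orbF subr_eq0 => /eqP e.
have : k * (k - 1) = 0 by rewrite mulrBr mulr1 e subrr.
move/eqP; rewrite mulf_eq0 subr_eq0 => /orP [/eqP k0|/eqP k1].
  by move: rA; rewrite hA k0 scale0r mxrank0.
by move/eqP: hne; apply; rewrite hA k1 scale1r.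
Qed.

Lemma ord2 (i : 'I_2) : i = 0 \/ i = 1.
Proof. by case: i => [[|[|//]]] ?; [left|right]; apply: val_inj. Qed.

End Part3.

Theorem lemma7 (R : realType) (rho : 'M[R[i]]_(2 * 2 * 2))
  (P Q : 'I_2 -> 'I_2 -> 'M[R[i]]_2) :
  density_matrix rho -> \rank rho = 3%N ->
  nontrivial_pm (P ^~ 0) -> nontrivial_pm (P ^~ 1) ->
  nontrivial_pm (Q ^~ 0) -> nontrivial_pm (Q ^~ 1) ->
  different_up_to_relabeling Q ->
  let sigma := assemblage rho P Q in
  ~ ((forall a b : 'I_2,
        \rank (sigma a b 0 0) = 1%N /\ \rank (sigma a b 1 1) = 1%N /\
        \rank (sigma a b 0 1) = 2%N /\ \rank (sigma a b 1 0) = 2%N))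
  /\
  ~ ((forall a y : 'I_2,
        \rank (sigma a 0 0 y) = 1%N /\ \rank (sigma a 1 0 y) = 2%N /\
        \rank (sigma a 0 1 y) = 2%N /\ \rank (sigma a 1 1 y) = 1%N)).
Proof.
move=> [hpsd _] hrank hP0 hP1 hQ0 hQ1 [hd1 hd2] sigma.
have proj_of : forall M : 'I_2 -> 'I_2 -> 'M[R[i]]_2,
    nontrivial_pm (M ^~ 0) -> nontrivial_pm (M ^~ 1) ->
    forall a x, rank_one_proj (M a x).
  move=> M [h00 [h10 _]] [h01 [h11 _]] a x.
  by case: (ord2 x) => ->; case: (ord2 a) => ->.
have fact_of : forall M : 'I_2 -> 'I_2 -> 'M[R[i]]_2,
    (forall a x, rank_one_proj (M a x)) ->
    exists f : 'I_2 -> 'I_2 -> 'rV[R[i]]_2 * R[i], forall a x,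
      [/\ (f a x).1 != 0, (f a x).2 != 0 & M a x = (f a x).2 *: (adjmx (f a x).1 *m (f a x).1)].
  move=> M hM.
  have h : forall a, exists g : 'I_2 -> 'rV[R[i]]_2 * R[i], forall x,
      [/\ (g x).1 != 0, (g x).2 != 0 & M a x = (g x).2 *: (adjmx (g x).1 *m (g x).1)].
    move=> a.
    apply: (@fin_all_exists _ (fun _ => ('rV[R[i]]_2 * R[i])%type)
      (fun x g => [/\ g.1 != 0, g.2 != 0 & M a x = g.2 *: (adjmx g.1 *m g.1)])) => x.
    have [_ [hadj hr]] := hM a x.
    have [u [s [hu hs he]]] := rank1_fact hadj hr.
    by exists (u, s).
  have [f hf] := @fin_all_exists _ (fun _ => 'I_2 -> ('rV[R[i]]_2 * R[i])%type)
    (fun a g => forall x, [/\ (g x).1 != 0, (g x).2 != 0 &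
        M a x = (g x).2 *: (adjmx (g x).1 *m (g x).1)]) h.
  by exists f.
have [fp hfp] := fact_of P (proj_of P hP0 hP1).
have [fq hfq] := fact_of Q (proj_of Q hQ0 hQ1).
set pv := fun a x => (fp a x).1.
set qv := fun b y => (fq b y).1.
have sigE : forall a b x y, sigma a b x y =
    sigPQ (pv a x) (qv b y) (fp a x).2 (fq b y).2 rho.
  move=> a b x y; rewrite /sigma /assemblage /sigPQ.
  by case: (hfp a x) => _ _ <-; case: (hfq b y) => _ _ <-.
have r1 : forall a b x y, \rank (sigma a b x y) = 1%N ->
    exists2 g, g != 0 & T3 (pv a x) (qv b y) g *m rho = 0.
  move=> a b x y; rewrite sigE => /rank1_ker [g gn hg]; exists g => //.
  case: (hfp a x) => _ hs _; case: (hfq b y) => _ ht _.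
  exact: (sigma_ker1 hpsd hs ht hg).
have r2 : forall a b x y, \rank (sigma a b x y) = 2%N ->
    forall g, g != 0 -> T3 (pv a x) (qv b y) g *m rho != 0.
  move=> a b x y hr g gn; apply/eqP => hT.
  move/eqP: gn; apply; apply: (rank2_inj hr).
  by rewrite sigE; apply: sigma_ker2.
have indep_p : forall x, indep2 (pv 0 x) (pv 1 x).
  move=> x; case: (hfp 0 x) => _ hs0 e0; case: (hfp 1 x) => hn1 hs1 e1.
  apply: (indep_gen e0 e1 hn1 hs1); apply: noscale_sum.
    exact: proj_of.
  by case: (ord2 x) => ->; [case: hP0 => _ [_ ->] | case: hP1 => _ [_ ->]].
have indep_q : forall y, indep2 (qv 0 y) (qv 1 y).
  move=> y; case: (hfq 0 y) => _ hs0 e0; case: (hfq 1 y) => hn1 hs1 e1.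
  apply: (indep_gen e0 e1 hn1 hs1); apply: noscale_sum.
    exact: proj_of.
  by case: (ord2 y) => ->; [case: hQ0 => _ [_ ->] | case: hQ1 => _ [_ ->]].
split.
  move=> H.
  apply: (core hrank (indep_p 0) (indep_p 1) (indep_q 0) (indep_q 1)).
  - move=> be a [->|->] [->|->]; apply: r1; exact: (H _ _).1.
  - move=> be a g [->|->] [->|->]; apply: r2; exact: (H _ _).2.2.2.
  - move=> be a [->|->] [->|->]; apply: r1; exact: (H _ _).2.1.
  - move=> be a g [->|->] [->|->]; apply: r2; exact: (H _ _).2.2.1.
move=> H.
have hQ01 : Q 0 0 != Q 0 1 by apply/eqP.
have hQ11 : Q 1 0 != Q 1 1.
  apply/eqP => e; apply: hd1.
  case: hQ0 => _ [_ s0]; case: hQ1 => _ [_ s1].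
  by apply: (addIr (Q 1 0)); rewrite s0 e s1.
have iq0 : indep2 (qv 0 0) (qv 0 1).
  case: (hfq 0 0) => _ hs0 e0; case: (hfq 0 1) => hn1 hs1 e1.
  by apply: (indep_gen e0 e1 hn1 hs1); apply: noscale_neq => //; apply: proj_of.
have iq1 : indep2 (qv 1 0) (qv 1 1).
  case: (hfq 1 0) => _ hs0 e0; case: (hfq 1 1) => hn1 hs1 e1.
  by apply: (indep_gen e0 e1 hn1 hs1); apply: noscale_neq => //; apply: proj_of.
apply: (core hrank (indep_p 0) (indep_p 1) iq0 iq1).
- move=> be a [->|->] [->|->]; apply: r1; exact: (H _ _).1.
- move=> be a g [->|->] [->|->]; apply: r2; exact: (H _ _).2.2.1.
- move=> be a [->|->] [->|->]; apply: r1; exact: (H _ _).2.2.2.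
- move=> be a g [->|->] [->|->]; apply: r2; exact: (H _ _).2.1.
Qed.
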